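(* Let $f_1^0, f_2^0, g_2^0, x^0\in\mathbb{R}$ with $\Delta := f_1^0-f_2^0>0$ and let $N\ge1$ be an integer. Let $\mu_1,L_1,\mu_2,L_2$ satisfy $0\le\mu_1<L_2\le L_1<\infty$, $\mu_2<L_2$, $\mu_2<L_1$, and either $\mu_2\ge0$, or $\mu_1>-\mu_2>0$ and $E:=\frac{L_2+\mu_2}{L_1L_2}\cdot\frac{L_2-L_1}{-\mu_2}+\mu_1^{-1}-L_1^{-1}\le0$. Let $p_1 := L_2^{-1}\frac{L_2-\mu_1}{L_1-\mu_1}+L_2^{-1}\big(1+\frac{L_2^{-1}-L_1^{-1}}{\mu_1^{-1}-L_1^{-1}}\big)$ (with $1/0$ interpreted as $\infty$ when $\mu_1=0$) and $U := -\sqrt{\frac{2\Delta}{p_1N}}$. Define, for $k=0,\dots,N$: $x^k = x^0-k\frac{U}{L_2}$, $g_1^k = g_2^0-(k-1)U$, $f_1^k = f_2(x^k)+\frac{N-k}{N}\Delta$, and for $k=0,\dots,N-1$: $\bar x^k = x^k-\frac{L_2-\mu_1}{L_1-\mu_1}\frac{U}{L_2}$. Define $f_2,f_1:\mathbb{R}\to\mathbb{R}$ by $f_2(x)=\frac12L_2(x-x^0)^2+g_2^0(x-x^0)+f_2^0$ and $f_1(x)=\frac12L_1(x-x^0)^2+g_1^0(x-x^0)+f_1^0$ for $x\le x^0$; $f_1(x)=\frac12L_1(x-x^k)^2+g_1^k(x-x^k)+f_1^k$ for $x\in[x^k,\bar x^k]$; $f_1(x)=\frac12\mu_1(x-x^{k+1})^2+g_1^{k+1}(x-x^{k+1})+f_1^{k+1}$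 for $x\in[\bar x^k,x^{k+1}]$ ($k=0,\dots,N-1$); $f_1(x)=\frac12L_1(x-x^N)^2+g_1^N(x-x^N)+f_1^N$ for $x\ge x^N$. Then $f_1\in\mathcal{F}_{\mu_1,L_1}$, $f_2\in\mathcal{F}_{\mu_2,L_2}$, and performing $N$ iterations of DCA ($x^{k+1}$ such that $\nabla f_1(x^{k+1})=\nabla f_2(x^k)$) on $F=f_1-f_2$ starting from $x^0$ produces the points $x^0,\dots,x^N$ and $$\tfrac12\min_{0\le k\le N}|\nabla f_1(x^k)-\nabla f_2(x^k)|^2=\frac{\Delta}{p_1N}.$$
   Context: For $\mu\in\mathbb{R}$ and $L\in(\mu,\infty]$, $\mathcal{F}_{\mu,L}$ is the class of proper lower semicontinuous functions $f$ with $f-\frac{\mu}{2}|\cdot|^2$ convex and $\frac{L}{2}|\cdot|^2-f$ convex (when $L<\infty$). A DCA iteration from $x$ on $F=f_1-f_2$ selects $g_2\in\partial f_2(x)$ and $x^+\in\operatorname{argmin}_w\{f_1(w)-g_2w\}$. *)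

(* Defs.v *)
From Stdlib Require Import Reals Lra.
From Coquelicot Require Import Coquelicot.
Open Scope R_scope.

Definition convex_R (f : R -> R) : Prop :=
  forall x y t, 0 <= t <= 1 -> f (t * x + (1 - t) * y) <= t * f x + (1 - t) * f y.

Definition lsc_R (f : R -> R) : Prop :=
  forall x eps, 0 < eps ->
    exists delta, 0 < delta /\ forall y, Rabs (y - x) < delta -> f x - eps < f y.

(** The class F_{mu,L} for a finite L (here f : R -> R is real-valued, hence proper). *)
Definition in_F (mu L : R) (f : R -> R) : Prop :=
  lsc_R f /\
  convex_R (fun x => f x - mu / 2 * x ^ 2) /\
  convex_R (fun x => L / 2 * x ^ 2 - f x).

(** One DCA iteration x -> x' on F = f1 - f2, for differentiable f2:
    g2 = grad f2(x) (the only element of the subdifferential) and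
    x' in argmin_w { f1 w - g2 w }; we also record grad f1(x') = grad f2(x). *)
Definition dca_step (f1 f2 : R -> R) (x x' : R) : Prop :=
  exists g2, is_derive f2 x g2 /\ is_derive f1 x' g2 /\
    (forall w, f1 x' - g2 * x' <= f1 w - g2 * w).

Fixpoint minN (h : nat -> R) (n : nat) : R :=
  match n with
  | O => h O
  | S n' => Rmin (minN h n') (h n)
  end.

Definition E_const (mu1 L1 mu2 L2 : R) : R :=
  (L2 + mu2) / (L1 * L2) * ((L2 - L1) / (- mu2)) + / mu1 - / L1.

Section Construction.
Variables (f10 f20 g20 x0 mu1 L1 L2 : R) (N : nat).

(** p1, with 1/mu1 = +oo when mu1 = 0 (so the fraction vanishes). *)
Definition p1 : R :=
  / L2 * ((L2 - mu1) / (L1 - mu1)) +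
  / L2 * (1 + (if Req_EM_T mu1 0 then 0 else (/ L2 - / L1) / (/ mu1 - / L1))).

Definition Uc : R := - sqrt (2 * (f10 - f20) / (p1 * INR N)).

Definition xs (k : nat) : R := x0 - INR k * Uc / L2.
Definition g1s (k : nat) : R := g20 - (INR k - 1) * Uc.
Definition f2fun (x : R) : R := 1 / 2 * L2 * (x - x0) ^ 2 + g20 * (x - x0) + f20.
Definition f1s (k : nat) : R := f2fun (xs k) + (INR N - INR k) / INR N * (f10 - f20).
Definition xbars (k : nat) : R := xs k - (L2 - mu1) / (L1 - mu1) * Uc / L2.

Definition pieceL (k : nat) (x : R) : R :=
  1 / 2 * L1 * (x - xs k) ^ 2 + g1s k * (x - xs k) + f1s k.
Definition pieceM (k : nat) (x : R) : R :=
  1 / 2 * mu1 * (x - xs (S k)) ^ 2 + g1s (S k) * (x - xs (S k)) + f1s (S k).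

Fixpoint f1_search (k fuel : nat) (x : R) : R :=
  match fuel with
  | O => 0
  | S fuel' =>
      if Rle_dec (xs k) x then
        if Rle_dec x (xbars k) then pieceL k x
        else if Rle_dec x (xs (S k)) then pieceM k x
        else f1_search (S k) fuel' x
      else f1_search (S k) fuel' x
  end.

Definition f1fun (x : R) : R :=
  if Rle_dec x x0 then 1 / 2 * L1 * (x - x0) ^ 2 + g1s 0 * (x - x0) + f10
  else if Rle_dec (xs N) x then pieceL N x
  else f1_search 0 N x.

End Construction.

(* Main.v *)
Require Import Defs.
From Stdlib Require Import Reals Lra Lia.
From Coquelicot Require Import Coquelicot.
Open Scope R_scope.

Lemma posq_bound (z h : R) :
  Rabs (Rmax 0 (z + h) ^ 2 - Rmax 0 z ^ 2 - 2 * Rmax 0 z * h) <= h ^ 2.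
Proof.
  apply Rabs_le. unfold Rmax.
  destruct (Rle_dec 0 (z+h)); destruct (Rle_dec 0 z); split; nra.
Qed.

Lemma posq_deriv (a x : R) :
  is_derive (fun t => Rmax 0 (t - a) ^ 2) x (2 * Rmax 0 (x - a)).
Proof.
  apply is_derive_Reals. intros eps Heps.
  exists (mkposreal eps Heps). intros h Hh Hlt. simpl in Hlt.
  replace (x + h - a) with ((x - a) + h) by ring.
  pose proof (posq_bound (x - a) h) as B.
  replace ((Rmax 0 (x - a + h) ^ 2 - Rmax 0 (x - a) ^ 2) / h - 2 * Rmax 0 (x - a))
    with ((Rmax 0 (x - a + h) ^ 2 - Rmax 0 (x - a) ^ 2 - 2 * Rmax 0 (x - a) * h) / h)
    by (field; auto).
  unfold Rdiv. rewrite Rabs_mult, Rabs_inv.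
  assert (0 < Rabs h) by (apply Rabs_pos_lt; auto).
  apply Rmult_lt_reg_r with (Rabs h); auto.
  rewrite Rmult_assoc, Rinv_l by lra.
  assert (h ^ 2 = Rabs h * Rabs h).
  { rewrite <- Rabs_mult. rewrite Rabs_right. ring. nra. }
  nra.
Qed.

Lemma tangent_ineq (f f' : R -> R) :
  (forall x, is_derive f x (f' x)) ->
  (forall x y, x <= y -> f' x <= f' y) ->
  forall z w, f z + f' z * (w - z) <= f w.
Proof.
  intros Hd Hm z w.
  destruct (Rtotal_order z w) as [Hlt|[Heq|Hgt]].
  - destruct (MVT_cor2 f f' z w Hlt) as [c [Hc1 Hc2]].
    { intros c _. apply is_derive_Reals. apply Hd. }
    assert (f' z <= f' c) by (apply Hm; lra). nra.
  - subst. lra.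
  - destruct (MVT_cor2 f f' w z Hgt) as [c [Hc1 Hc2]].
    { intros c _. apply is_derive_Reals. apply Hd. }
    assert (f' c <= f' z) by (apply Hm; lra). nra.
Qed.

Lemma convex_of_deriv (f f' : R -> R) :
  (forall x, is_derive f x (f' x)) ->
  (forall x y, x <= y -> f' x <= f' y) ->
  forall x y t, 0 <= t <= 1 -> f (t * x + (1 - t) * y) <= t * f x + (1 - t) * f y.
Proof.
  intros Hd Hm x y t Ht.
  set (z := t * x + (1 - t) * y).
  pose proof (tangent_ineq f f' Hd Hm z x) as A.
  pose proof (tangent_ineq f f' Hd Hm z y) as B.
  assert (t * (f z + f' z * (x - z)) + (1 - t) * (f z + f' z * (y - z)) = f z)
    by (unfold z; ring).
  nra.
Qed.

Lemma lsc_of_deriv (f f' : R -> R) :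
  (forall x, is_derive f x (f' x)) ->
  forall x eps, 0 < eps ->
    exists delta, 0 < delta /\ forall y, Rabs (y - x) < delta -> f x - eps < f y.
Proof.
  intros Hd x eps Heps.
  pose proof (proj1 (is_derive_Reals f x (f' x)) (Hd x) 1 Rlt_0_1) as [d Hdl].
  set (K := Rabs (f' x) + 1).
  assert (HK : 0 < K) by (unfold K; pose proof (Rabs_pos (f' x)); lra).
  exists (Rmin d (eps / K)). split.
  { apply Rmin_pos. apply cond_pos. apply Rdiv_lt_0_compat; lra. }
  intros y Hy.
  destruct (Req_dec y x) as [->|Hne]; [lra|].
  assert (Hy1 : Rabs (y - x) < d) by (eapply Rlt_le_trans; [apply Hy| apply Rmin_l]).
  assert (Hy2 : Rabs (y - x) < eps / K) by (eapply Rlt_le_trans; [apply Hy| apply Rmin_r]).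
  specialize (Hdl (y - x)). replace (x + (y - x)) with y in Hdl by ring.
  assert (Hh : y - x <> 0) by lra.
  specialize (Hdl Hh Hy1).
  assert (0 < Rabs (y - x)) by (apply Rabs_pos_lt; auto).
  assert (E1 : Rabs (f y - f x - f' x * (y - x)) < Rabs (y - x)).
  { replace (f y - f x - f' x * (y - x)) with (((f y - f x) / (y - x) - f' x) * (y - x))
      by (field; auto).
    rewrite Rabs_mult. rewrite <- (Rmult_1_l (Rabs (y - x))) at 2.
    apply Rmult_lt_compat_r; auto. }
  assert (E2 : Rabs (f' x * (y - x)) <= Rabs (f' x) * Rabs (y - x)) by (rewrite Rabs_mult; lra).
  assert (E3 : K * Rabs (y - x) < eps).
  { apply (Rmult_lt_compat_l K) in Hy2; auto. unfold Rdiv in Hy2.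
    rewrite (Rmult_comm eps), <- Rmult_assoc, Rinv_r, Rmult_1_l in Hy2 by lra. lra. }
  unfold K in E3.
  pose proof (Rabs_le_between (f y - f x - f' x * (y - x)) (Rabs (y-x))) as [P _].
  pose proof (Rabs_le_between (f' x * (y - x)) (Rabs (f' x) * Rabs (y - x))) as [Q _].
  specialize (P (Rlt_le _ _ E1)). specialize (Q E2). nra.
Qed.

Lemma psi_step (x y a b c : R) :
  x <= y -> a <= b -> b <= c ->
  0 <= (Rmax 0 (y - b) - Rmax 0 (y - c)) - (Rmax 0 (x - b) - Rmax 0 (x - c)) <=
  (Rmin y c - Rmin x c) - (Rmin y a - Rmin x a).
Proof.
  intros. unfold Rmax, Rmin.
  repeat match goal with |- context [Rle_dec ?u ?v] => destruct (Rle_dec u v) end;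
  split; lra.
Qed.
Fixpoint sumR (f : nat -> R) (n : nat) : R :=
  match n with O => 0 | S m => sumR f m + f m end.

Lemma sumR_deriv (f : nat -> R -> R) (f' : nat -> R -> R) n t :
  (forall j, is_derive (f j) t (f' j t)) ->
  is_derive (fun y => sumR (fun j => f j y) n) t (sumR (fun j => f' j t) n).
Proof.
  intros H. induction n as [|n IH]; simpl.
  - auto_derive; auto.
  - apply (is_derive_plus (fun y => sumR (fun j => f j y) n) (f n)); auto.
Qed.

Lemma deriv_sub_sq (f : R -> R) t d k :
  is_derive f t d -> is_derive (fun y => f y - k / 2 * y ^ 2) t (d - k * t).
Proof.
  intros H. apply (is_derive_minus f (fun y => k / 2 * y ^ 2)); auto.
  auto_derive; auto. field.
Qed.

Lemma deriv_sq_sub (f : R -> R) t d k :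
  is_derive f t d -> is_derive (fun y => k / 2 * y ^ 2 - f y) t (k * t - d).
Proof.
  intros H. apply (is_derive_minus (fun y => k / 2 * y ^ 2) f); auto.
  auto_derive; auto. field.
Qed.


Lemma minN_const (h : nat -> R) C n :
  (forall k, (k <= n)%nat -> h k = C) -> minN h n = C.
Proof.
  induction n as [|n IH]; intros H; simpl.
  - apply H; lia.
  - rewrite IH by (intros; apply H; lia). rewrite H by lia.
    unfold Rmin; destruct Rle_dec; auto.
Qed.

Lemma sumR_scal (f : nat -> R) k n : sumR (fun j => k * f j) n = k * sumR f n.
Proof. induction n as [|n IH]; simpl; [ring| rewrite IH; ring]. Qed.

Theorem proposition5 (f10 f20 g20 x0 mu1 L1 mu2 L2 : R) (N : nat) :
  0 < f10 - f20 ->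
  (1 <= N)%nat ->
  0 <= mu1 -> mu1 < L2 -> L2 <= L1 ->
  mu2 < L2 -> mu2 < L1 ->
  (0 <= mu2 \/ ((0 < - mu2 /\ - mu2 < mu1) /\ E_const mu1 L1 mu2 L2 <= 0)) ->
  let x := xs f10 f20 x0 mu1 L1 L2 N in
  let F1 := f1fun f10 f20 g20 x0 mu1 L1 L2 N in
  let F2 := f2fun f20 g20 x0 L2 in
  in_F mu1 L1 F1 /\ in_F mu2 L2 F2 /\
  (forall k, (k <= N)%nat -> ex_derive F1 (x k) /\ ex_derive F2 (x k)) /\
  (forall k, (k < N)%nat -> dca_step F1 F2 (x k) (x (S k))) /\
  1 / 2 * minN (fun k => Rabs (Derive F1 (x k) - Derive F2 (x k)) ^ 2) N
    = (f10 - f20) / (p1 mu1 L1 L2 * INR N).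
Proof.
  intros HD HN1 Hmu1 Hmu1L2 HL2L1 Hmu2L2 Hmu2L1 Hcase x F1 F2.
  assert (HL2 : 0 < L2) by lra.
  assert (HL1m : 0 < L1 - mu1) by lra.
  assert (HNpos : 0 < INR N) by (apply lt_0_INR; lia).
  set (P := p1 mu1 L1 L2).
  assert (Pval : P = (L2*(L1-mu1) + L2^2 - 2*L2*mu1 + L1*mu1)/(L2^2*(L1-mu1))).
  { unfold P, p1. destruct (Req_EM_T mu1 0) as [E|E].
    - rewrite E. field. lra.
    - field. repeat split; lra. }
  assert (HP : 0 < P).
  { rewrite Pval. apply Rdiv_lt_0_compat. { assert (L2*L1 >= L2*L2) by nra. assert (L1*mu1 >= L2*mu1) by nra. assert (L2*L2 > L2*mu1) by nra. nra. } apply Rmult_lt_0_compat; nra. }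
  set (U := Uc f10 f20 mu1 L1 L2 N).
  assert (Hsq : 0 < sqrt (2 * (f10 - f20) / (P * INR N))).
  { apply sqrt_lt_R0. apply Rdiv_lt_0_compat; nra. }
  assert (HU : U < 0) by (unfold U, Uc; fold P; lra).
  assert (HU2 : U^2 = 2 * (f10 - f20) / (P * INR N)).
  { unfold U, Uc. fold P.
    replace ((- sqrt (2 * (f10 - f20) / (P * INR N))) ^ 2) with
      (sqrt (2 * (f10 - f20) / (P * INR N)) * sqrt (2 * (f10 - f20) / (P * INR N))) by ring.
    apply sqrt_sqrt. left. apply Rdiv_lt_0_compat; nra. }
  assert (DU : f10 - f20 = P * INR N * U^2 / 2).
  { rewrite HU2. field. split; lra. }
  pose (XB := xbars f10 f20 x0 mu1 L1 L2 N).
  pose (G1 := g1s f10 f20 g20 mu1 L1 L2 N).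
  pose (FS := f1s f10 f20 g20 x0 mu1 L1 L2 N).
  pose (PL := pieceL f10 f20 g20 x0 mu1 L1 L2 N).
  pose (PM := pieceM f10 f20 g20 x0 mu1 L1 L2 N).
  assert (EX : forall k, x k = x0 - INR k * U / L2) by reflexivity.
  assert (EXB : forall k, XB k = x k - (L2-mu1)/(L1-mu1)*U/L2) by reflexivity.
  assert (EG : forall k, G1 k = g20 - (INR k - 1)*U) by reflexivity.
  assert (EFS : forall k, FS k = 1/2*L2*(x k - x0)^2 + g20*(x k - x0) + f20
                                 + (INR N - INR k)/INR N * (f10 - f20)) by reflexivity.
  assert (EPL : forall k t, PL k t = 1/2*L1*(t - x k)^2 + G1 k * (t - x k) + FS k) by reflexivity.
  assert (EPM : forall k t, PM k t = 1/2*mu1*(t - x (S k))^2 + G1 (S k)*(t - x (S k)) + FS (S k))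
    by reflexivity.
  assert (I1 : forall k t, PL k t - (L1-mu1)/2*(t - XB k)^2 = PM k t).
  { intros k t. rewrite EPL, EPM, !EFS, !EG, EXB, !EX, S_INR, DU, Pval.
    field. repeat split; lra. }
  assert (I2 : forall k t, PM k t + (L1-mu1)/2*(t - x (S k))^2 = PL (S k) t).
  { intros k t. rewrite EPL, EPM. field. }
  pose (dL := fun k t => L1 * (t - x k) + G1 k).
  assert (I3 : forall k t, dL k t - (L1-mu1)*((t - XB k) - (t - x (S k))) = dL (S k) t).
  { intros k t. unfold dL. rewrite !EG, EXB, !EX, S_INR. field. repeat split; lra. }
  pose (a := (L2-mu1)/(L1-mu1)).
  pose (h := - U / L2).
  assert (Hh : 0 < h) by (unfold h; unfold Rdiv; apply Rmult_lt_0_compat; [lra | apply Rinv_0_lt_compat; lra]).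
  assert (Ha0 : 0 < a) by (unfold a; unfold Rdiv; apply Rmult_lt_0_compat; [lra | apply Rinv_0_lt_compat; lra]).
  assert (Ha1 : a <= 1).
  { unfold a. apply Rmult_le_reg_r with (L1 - mu1); [lra|].
    unfold Rdiv; rewrite Rmult_assoc, Rinv_l by lra; lra. }
  assert (XS : forall k, x (S k) = x k + h).
  { intros k. rewrite !EX, S_INR. unfold h. field. lra. }
  assert (X0 : x 0%nat = x0).
  { rewrite EX. simpl. field. lra. }
  assert (XBk : forall k, XB k = x k + a * h).
  { intros k. rewrite EXB. unfold a, h. field. split; lra. }
  assert (Xle : forall k, x k <= XB k /\ XB k <= x (S k)).
  { intros k. rewrite XBk, XS. split; nra. }
  assert (Xmono : forall j k, (j <= k)%nat -> x j <= x k).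
  { intros j k Hjk. induction Hjk; [lra|]. rewrite XS. lra. }
  pose (Phi := fun j t => Rmax 0 (t - XB j)^2 - Rmax 0 (t - x (S j))^2).
  pose (Psi := fun j t => Rmax 0 (t - XB j) - Rmax 0 (t - x (S j))).
  pose (SP := fun n t => sumR (fun j => Phi j t) n).
  pose (SQ := fun n t => sumR (fun j => Psi j t) n).
  pose (G := fun t => PL 0%nat t - (L1-mu1)/2 * SP N t).
  pose (G' := fun t => dL 0%nat t - (L1-mu1) * SQ N t).
  assert (Head : forall k t, x k <= t ->
     PL 0%nat t - (L1-mu1)/2 * SP k t = PL k t /\ dL 0%nat t - (L1-mu1)*SQ k t = dL k t).
  { induction k as [|k IH]; intros t Ht.
    - unfold SP, SQ; simpl; split; ring.
    - assert (Ht' : x k <= t) by (rewrite XS in Ht; lra).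
      destruct (IH t Ht') as [A B].
      destruct (Xle k) as [X1 X2].
      change (SP (S k) t) with (SP k t + Phi k t).
      change (SQ (S k) t) with (SQ k t + Psi k t).
      unfold Phi, Psi. rewrite !Rmax_right by lra.
      split.
      + rewrite <- I2, <- I1, <- A. ring.
      + rewrite <- I3, <- B. ring. }
  assert (Tail : forall m n t, (n <= m)%nat -> t <= XB n -> SP m t = SP n t /\ SQ m t = SQ n t).
  { intros m n t Hnm Ht. induction Hnm as [|m Hnm IH]; [split; reflexivity|].
    destruct IH as [A B].
    assert (x n <= x m) by (apply Xmono; auto).
    assert (XB n <= XB m) by (rewrite !XBk; lra).
    destruct (Xle m) as [X1 X2].
    change (SP (S m) t) with (SP m t + Phi m t).
    change (SQ (S m) t) with (SQ m t + Psi m t).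
    unfold Phi, Psi. rewrite !Rmax_left by lra.
    split; [rewrite A | rewrite B]; ring. }
  assert (VA : forall k t, (k <= N)%nat -> x k <= t -> t <= XB k -> G t = PL k t /\ G' t = dL k t).
  { intros k t Hk H1 H2. destruct (Tail N k t Hk H2) as [A B].
    destruct (Head k t H1) as [C D]. unfold G, G'. rewrite A, B. split; assumption. }
  assert (VA0 : forall t, t <= x0 -> G t = PL 0%nat t).
  { intros t Ht. destruct (Xle 0%nat) as [X1 X2].
    destruct (Tail N 0%nat t ltac:(lia) ltac:(lra)) as [A B].
    unfold G. rewrite A. unfold SP; simpl. ring. }
  assert (VAN : forall t, x N <= t -> G t = PL N t).
  { intros t Ht. destruct (Head N t Ht) as [A B]. exact A. }
  assert (VB : forall k t, (k < N)%nat -> XB k <= t -> t <= x (S k) -> G t = PM k t).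
  { intros k t Hk H1 H2. destruct (Xle (S k)) as [X1 X2]. destruct (Xle k) as [X3 X4].
    destruct (Tail N (S k) t Hk ltac:(lra)) as [A B].
    destruct (Head k t ltac:(lra)) as [C D].
    unfold G. rewrite A.
    change (SP (S k) t) with (SP k t + Phi k t).
    unfold Phi. rewrite (Rmax_right 0 (t - XB k)) by lra.
    rewrite (Rmax_left 0 (t - x (S k))) by lra.
    rewrite <- I1, <- C. ring. }
  assert (HSearch : forall fuel j t, (j + fuel <= N)%nat -> x j <= t -> t < x (j + fuel)%nat ->
            f1_search f10 f20 g20 x0 mu1 L1 L2 N j fuel t = G t).
  { induction fuel as [|fuel IH]; intros j t Hj H1 H2.
    - rewrite Nat.add_0_r in H2. lra.
    - simpl f1_search.
      destruct (Rle_dec (xs f10 f20 x0 mu1 L1 L2 N j) t) as [r|r]; [|exfalso; apply r; exact H1].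
      destruct (Rle_dec t (xbars f10 f20 x0 mu1 L1 L2 N j)) as [r0|r0].
      + destruct (VA j t ltac:(lia) H1 r0) as [A _]. rewrite A. reflexivity.
      + destruct (Rle_dec t (xs f10 f20 x0 mu1 L1 L2 N (S j))) as [r1|r1].
        * rewrite (VB j t ltac:(lia) ltac:(fold XB in r0; lra) r1). reflexivity.
        * apply IH; [lia | fold x in r1; lra | rewrite <- plus_n_Sm in H2; exact H2]. }
  assert (F1G : forall t, F1 t = G t).
  { intros t. unfold F1, f1fun.
    destruct (Rle_dec t x0) as [r|r].
    - rewrite (VA0 t r). rewrite EPL, EFS, X0.
      change (g1s f10 f20 g20 mu1 L1 L2 N 0) with (G1 0%nat).
      replace (INR 0) with 0 by reflexivity. field. lra.
    - destruct (Rle_dec (xs f10 f20 x0 mu1 L1 L2 N N) t) as [r0|r0].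
      + rewrite (VAN t r0). reflexivity.
      + symmetry. symmetry. apply HSearch; [lia | rewrite X0; lra | simpl; fold x in r0; lra]. }
  assert (DPhi : forall (j : nat) (t : R), is_derive (fun y => Phi j y) t (2 * Psi j t)).
  { intros j t. unfold Phi, Psi.
    replace (2 * (Rmax 0 (t - XB j) - Rmax 0 (t - x (S j)))) with
      (2 * Rmax 0 (t - XB j) - 2 * Rmax 0 (t - x (S j))) by ring.
    apply (is_derive_minus (fun y => Rmax 0 (y - XB j) ^ 2) (fun y => Rmax 0 (y - x (S j)) ^ 2));
      apply posq_deriv. }
  assert (DS : forall t : R, is_derive (fun y => SP N y) t (2 * SQ N t)).
  { intros t. unfold SP, SQ. rewrite <- sumR_scal.
    apply (sumR_deriv Phi (fun j t => 2 * Psi j t)). intros j. apply DPhi. }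
  assert (DG : forall t : R, is_derive G t (G' t)).
  { intros t. unfold G, G'.
    replace (dL 0%nat t - (L1-mu1)*SQ N t) with (dL 0%nat t - (L1-mu1)/2 * (2 * SQ N t)) by field.
    apply (is_derive_minus (fun y => PL 0%nat y) (fun y => (L1-mu1)/2 * SP N y)).
    - apply (is_derive_ext (fun y => 1/2*L1*(y - x 0%nat)^2 + G1 0%nat * (y - x 0%nat) + FS 0%nat)).
      { intros y. rewrite EPL. reflexivity. }
      auto_derive; auto. unfold dL. field.
    - apply (is_derive_scal (fun y => SP N y)). apply DS. }
  assert (DF1 : forall t : R, is_derive F1 t (G' t)).
  { intros t. apply (is_derive_ext G); [intros; symmetry; apply F1G | apply DG]. }
  assert (Slope : forall t s, t <= s -> 0 <= SQ N s - SQ N t <= s - t).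
  { intros t s Hts.
    assert (Hn : forall n, 0 <= SQ n s - SQ n t <=
              (Rmin s (x n) - Rmin t (x n)) - (Rmin s (x 0%nat) - Rmin t (x 0%nat))).
    { induction n as [|n IH].
      - unfold SQ; simpl. lra.
      - change (SQ (S n) s) with (SQ n s + Psi n s).
        change (SQ (S n) t) with (SQ n t + Psi n t).
        destruct (Xle n) as [X1 X2].
        pose proof (psi_step t s (x n) (XB n) (x (S n)) Hts X1 X2) as PS.
        unfold Psi. lra. }
    specialize (Hn N).
    assert (Rmin s (x N) - Rmin t (x N) <= s - t) by (unfold Rmin; repeat destruct Rle_dec; lra).
    assert (0 <= Rmin s (x 0%nat) - Rmin t (x 0%nat)) by (unfold Rmin; repeat destruct Rle_dec; lra).
    lra. }
  assert (Mono : forall t s, t <= s -> mu1 * (s - t) <= G' s - G' t <= L1 * (s - t)).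
  { intros t s Hts. destruct (Slope t s Hts) as [S1 S2].
    unfold G', dL.
    replace (L1 * (s - x 0%nat) + G1 0%nat - (L1 - mu1) * SQ N s -
       (L1 * (t - x 0%nat) + G1 0%nat - (L1 - mu1) * SQ N t))
      with (L1 * (s - t) - (L1 - mu1) * (SQ N s - SQ N t)) by ring.
    split; nra. }
  assert (DF2 : forall t : R, is_derive F2 t (L2 * (t - x0) + g20)).
  { intros t. unfold F2, f2fun. auto_derive; auto. field. }
  assert (MonoG : forall t s, t <= s -> G' t <= G' s).
  { intros t s Hts. destruct (Mono t s Hts). nra. }
  split; [|split; [|split; [|split]]].
  - split; [|split].
    + intros y eps Heps. apply (lsc_of_deriv F1 G' DF1 y eps Heps).
    + intros y z t Ht. apply (convex_of_deriv (fun w => F1 w - mu1 / 2 * w ^ 2) (fun w => G' w - mu1 * w)); auto.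
      * intros w. apply deriv_sub_sq. apply DF1.
      * intros u v Huv. destruct (Mono u v Huv). nra.
    + intros y z t Ht. apply (convex_of_deriv (fun w => L1 / 2 * w ^ 2 - F1 w) (fun w => L1 * w - G' w)); auto.
      * intros w. apply deriv_sq_sub. apply DF1.
      * intros u v Huv. destruct (Mono u v Huv). nra.
  - split; [|split].
    + intros y eps Heps. apply (lsc_of_deriv F2 _ DF2 y eps Heps).
    + intros y z t Ht. apply (convex_of_deriv (fun w => F2 w - mu2 / 2 * w ^ 2) (fun w => (L2 * (w - x0) + g20) - mu2 * w)); auto.
      * intros w. apply deriv_sub_sq. apply DF2.
      * intros u v Huv. nra.
    + intros y z t Ht. apply (convex_of_deriv (fun w => L2 / 2 * w ^ 2 - F2 w) (fun w => L2 * w - (L2 * (w - x0) + g20))); auto.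
      * intros w. apply deriv_sq_sub. apply DF2.
      * intros u v Huv. lra.
  - intros k Hk. split; [exists (G' (x k)); apply DF1 | exists (L2 * (x k - x0) + g20); apply DF2].
  - intros k Hk. exists (L2 * (x k - x0) + g20).
    assert (E : G' (x (S k)) = L2 * (x k - x0) + g20).
    { destruct (Xle (S k)) as [X1 X2].
      destruct (VA (S k) (x (S k)) ltac:(lia) ltac:(lra) X1) as [_ A]. rewrite A.
      unfold dL. rewrite EG, !EX, S_INR. field. lra. }
    split; [apply DF2|]. split; [rewrite <- E; apply DF1|].
    intros w. pose proof (tangent_ineq F1 G' DF1 MonoG (x (S k)) w) as T.
    rewrite E in T. nra.
  - assert (Dk : forall k, (k <= N)%nat -> Derive F1 (x k) - Derive F2 (x k) = U).
    { intros k Hk.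
      rewrite (is_derive_unique _ _ _ (DF1 (x k))), (is_derive_unique _ _ _ (DF2 (x k))).
      destruct (Xle k) as [X1 X2].
      destruct (VA k (x k) Hk ltac:(lra) X1) as [_ A]. rewrite A.
      unfold dL. rewrite EG, EX. field. lra. }
    rewrite (minN_const _ (U^2)).
    + fold P. rewrite HU2. field. split; lra.
    + intros k Hk. cbv beta. rewrite (Dk k Hk). rewrite Rabs_left by lra. ring.
Qed.
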